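(* Let $\mathcal{U}=(u_1,\dots,u_n)$ be a complex projective 2-design consisting of $n$ unit-norm vectors in $\mathbb{C}^d$. For $1\le s\le n$, let $\xi_1,\dots,\xi_n$ be iid $\textsc{bernoulli}(s/n)$ random variables and form the random subsystem $\mathcal{U}'=(u_i:\xi_i=1)$. Let $\delta\in(0,1)$. If \[ s\ge 4\big[\sqrt d+\sqrt{\log(d/\delta)}\big]^2, \] then $\mathcal{U}'$ spans $\mathbb{C}^d$ with probability at least $1-\delta$.
   Context: A system $(u_1,\dots,u_n)$ of unit vectors in $\mathbb{C}^d$ is a complex projective 2-design if $\frac1n\sum_{i=1}^n|\langle a,u_i\rangle|^4=\mathbb{E}|\langle a,v\rangle|^4$ for every $a\in\mathbb{C}^d$, where $v$ is uniform on the complex unit sphere of $\mathbb{C}^d$; equivalently, $\frac1n\sum_{i=1}^n|\operatorname{Tr}[M u_iu_i^*]|^2=\frac{1}{d(d+1)}\big[\|M\|_F^2+(\operatorname{Tr}M)^2\big]$ for all self-adjoint $M\in\mathbb{C}^{d\times d}$. Here $\langle a,b\rangle=a^*b$. *)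

(* Defs.v *)
From HB Require Import structures.
From mathcomp Require Import all_boot all_order all_algebra.
From mathcomp Require Import complex.
From mathcomp Require Import reals exp.
Set Implicit Arguments. Unset Strict Implicit. Unset Printing Implicit Defensive.
Import Order.TTheory GRing.Theory Num.Theory.
Local Open Scope ring_scope.

Section Defs.
Variable R : realType.
Local Notation C := R[i].

Definition adjmx m n (A : 'M[C]_(m, n)) : 'M[C]_(n, m) := (map_mx Num.conj A)^T.

Definition selfadj d (M : 'M[C]_d) : Prop := adjmx M = M.

Definition sqnorm d (u : 'cV[C]_d) : C := (adjmx u *m u) 0 0.

Definition unit_system d n (u : 'I_n -> 'cV[C]_d) : Prop :=
  forall i, sqnorm (u i) = 1.

(* complex projective 2-design, in the (equivalent) trace form:
   (1/n) sum_i |Tr[M u_i u_i^*]|^2 = (||M||_F^2 + (Tr M)^2)/(d(d+1))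
   for all self-adjoint M. *)
Definition proj_2design d n (u : 'I_n -> 'cV[C]_d) : Prop :=
  unit_system u /\
  forall M : 'M[C]_d, selfadj M ->
    n%:R^-1 * \sum_(i < n) `|\tr (M *m (u i *m adjmx (u i)))| ^+ 2
    = (d%:R * (d%:R + 1))^-1 *
      (\sum_(j < d) \sum_(k < d) `|M j k| ^+ 2 + (\tr M) ^+ 2).

Definition spans d n (u : 'I_n -> 'cV[C]_d) (S : {set 'I_n}) : bool :=
  \rank (\matrix_(j < d, i < n) (if i \in S then u i j 0 else 0)) == d.

(* law of the random set {i : xi_i = 1} for iid Bernoulli(p) selectors *)
Definition bern_prob n (p : R) (S : {set 'I_n}) : R :=
  p ^+ #|S| * (1 - p) ^+ (n - #|S|).

Definition prob_spans d n (u : 'I_n -> 'cV[C]_d) (p : R) : R :=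
  \sum_(S : {set 'I_n} | spans u S) bern_prob p S.

End Defs.

(* Main.v *)
Require Import Defs.
From HB Require Import structures.
From mathcomp Require Import all_boot all_order all_algebra.
From mathcomp Require Import complex.
From mathcomp Require Import reals exp.
From mathcomp Require Import ring lra.
Import Order.TTheory GRing.Theory Num.Theory.
Local Open Scope ring_scope.

Section Comb.
Variable R : realType.
Local Notation C := R[i].
Variables (d n : nat) (u : 'I_n -> 'cV[C]_d).

Definition NN (S : {set 'I_n}) : 'M[C]_(d, n) :=
  \matrix_(j < d, i < n) (if i \in S then u i j 0 else 0).

Lemma spansE S : spans u S = row_free (NN S).
Proof. by []. Qed.

Definition lin i (w : 'rV[C]_d) : C := (w *m u i) 0 0.

Lemma NNmul w S i : (w *m NN S) 0 i = if i \in S then lin i w else 0.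
Proof.
rewrite /lin !mxE; case E: (i \in S).
  by apply: eq_bigr => j _; rewrite !mxE E.
by apply: big1 => j _; rewrite mxE E mulr0.
Qed.

Lemma NNkillsP w S : w *m NN S = 0 <-> (forall i, i \in S -> lin i w = 0).
Proof.
split=> [H i iS | H].
  by have := NNmul w S i; rewrite H iS mxE => <-.
apply/rowP => i; rewrite NNmul mxE; case: ifP => // /H //.
Qed.

Lemma row_freeP' m (A : 'M[C]_(m, n)) :
  row_free A <-> (forall w : 'rV_m, w *m A = 0 -> w = 0).
Proof.
rewrite -kermx_eq0; split=> [/eqP K0 w /sub_kermxP | H].
  by rewrite K0 => /submx0null.
apply/eqP/row_matrixP => i; rewrite row0; apply: H.
by apply/sub_kermxP; apply: submx_trans (row_sub _ _) (submx_refl _); exact: mulmx_ker.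
Qed.

Lemma spans_kerP S : spans u S <-> (forall w : 'rV[C]_d, w *m NN S = 0 -> w = 0).
Proof. by rewrite spansE row_freeP'. Qed.

Lemma spans_linP S :
  spans u S <-> (forall w : 'rV[C]_d, (forall i, i \in S -> lin i w = 0) -> w = 0).
Proof.
rewrite spans_kerP; split=> H w Hw; apply: H; first by apply/NNkillsP.
by apply/NNkillsP.
Qed.

Variable p : R.

Definition wt (A S : {set 'I_n}) : R :=
  \prod_(i in A) (if i \in S then p else 1 - p).

Definition Q (A X : {set 'I_n}) : R :=
  \sum_(S : {set 'I_n} | S \subset A) wt A S * (if spans u (X :|: S) then 1 else 0).

Lemma wt_out (A S : {set 'I_n}) x : x \in A -> x \notin S -> wt A S = (1 - p) * wt (A :\ x) S.
Proof.
move=> xA xS; rewrite /wt (bigD1 x) //= (negbTE xS); congr (_ * _).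
by apply: eq_bigl => i; rewrite in_setD1 andbC.
Qed.

Lemma wt_in (A S : {set 'I_n}) x : x \in A -> x \notin S -> wt A (x |: S) = p * wt (A :\ x) S.
Proof.
move=> xA xS; rewrite /wt (bigD1 x) //= setU11; congr (_ * _).
apply: eq_big => i; first by rewrite in_setD1 andbC.
by move=> /andP[_ ix]; rewrite in_setU1 (negbTE ix).
Qed.

Lemma Qsplit (A X : {set 'I_n}) x : x \in A ->
  Q A X = (1 - p) * Q (A :\ x) X + p * Q (A :\ x) (x |: X).
Proof.
move=> xA; rewrite /Q (bigID (fun S : {set 'I_n} => x \in S)) /= addrC; congr (_ + _).
  rewrite mulr_sumr; apply: eq_big => S; first by rewrite subsetD1.
  by move=> /andP[_ xS]; rewrite (wt_out _ _ _ xA xS) mulrA.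
rewrite mulr_sumr (reindex_onto (fun S => x |: S) (fun S => S :\ x)) /=; last first.
  by move=> S /andP[_ xS]; rewrite setD1K.
apply: eq_big => S.
  rewrite setU11 andbT subsetD1.
  apply/andP/andP => [[sA /eqP <-] | [sA xS]].
    split; last by rewrite setD11.
    by apply: subset_trans (subsetDl _ _) sA.
  split; first by rewrite subUset sub1set xA.
  by apply/eqP; rewrite setU1K.
move=> /andP[_ /eqP eS]; have xS : x \notin S by rewrite -eS setD11.
by rewrite (wt_in _ _ _ xA xS) setUA (setUC X) -!mulrA.
Qed.

Hypothesis p0 : 0 <= p.
Hypothesis p1 : p <= 1.

Definition q : R := 1 - p / 2.
Definition g (m r : nat) : R := if r == 0%N then 0 else 2 ^+ r * q ^+ m.

Lemma q_ge0 : 0 <= q.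
Proof. rewrite /q; move: p0 p1 => a b. lra. Qed.

Lemma g_ge0 m r : 0 <= g m r.
Proof.
rewrite /g; case: eqP => // _; apply: mulr_ge0; apply: exprn_ge0 => //.
exact: q_ge0.
Qed.

Lemma g_monor m r r' : (r <= r')%N -> g m r <= g m r'.
Proof.
move=> le; case: (eqVneq r 0%N) => [->|r0]; first by rewrite {1}/g eqxx g_ge0.
have r'0 : r' != 0%N by apply/eqP => E; move: le; rewrite E leqn0 (negbTE r0).
rewrite /g (negbTE r0) (negbTE r'0); apply: ler_wpM2r.
  exact: exprn_ge0 q_ge0.
by rewrite ler_eXn2l // ltr1n.
Qed.

Lemma g_rec m r : (0 < r)%N -> p * g m r.-1 + (1 - p) * g m.-1 r <= g m r.
Proof.
case: r => // r _ /=.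
case: m => [|m] /=.
  have H := g_monor 0 _ _ (leqnSn r).
  have := ler_wpM2l p0 H; move: p0 p1 => a b; lra.
have ht : 0 <= q ^+ m by exact: exprn_ge0 q_ge0.
case: r => [|r]; rewrite /g /=.
  rewrite mulr0 add0r expr1 exprS.
  have hq : 0 <= q - (1 - p) by rewrite /q; move: p0 p1 => a b; lra.
  have := mulr_ge0 hq ht; move: p0 p1 => a b; rewrite /q; nra.
have ha : 0 <= 2 ^+ r.+1 :> R by exact: exprn_ge0.
rewrite [2 ^+ r.+2]exprS [q ^+ m.+1]exprS.
have := mulr_ge0 (mulr_ge0 ha ht) (sqr_ge0 p).
move: p0 p1 => a b; rewrite /q; nra.
Qed.

Lemma Q0 X : Q set0 X = if spans u X then 1 else 0.
Proof.
rewrite /Q (eq_bigl (fun S => S == set0)); last by move=> S; rewrite subset0.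
by rewrite big_pred1_eq /wt big_set0 mul1r setU0.
Qed.

Lemma kermx_mono (X Y : {set 'I_n}) : X \subset Y ->
  (kermx (NN Y) <= kermx (NN X))%MS.
Proof.
move=> XY; apply/row_subP => i; apply/sub_kermxP.
have : row i (kermx (NN Y)) *m NN Y = 0 by rewrite -row_mul mulmx_ker row0.
move/NNkillsP => H; apply/NNkillsP => j jX; apply: H; exact: (subsetP XY).
Qed.

Lemma count_D1 (A : {set 'I_n}) x (P : pred 'I_n) :
  (#|[set i in A | P i]| <= (#|[set i in A :\ x | P i]|).+1)%N.
Proof.
apply: leq_trans (_ : #|x |: [set i in A :\ x | P i]| <= _)%N.
  apply: subset_leq_card; apply/subsetP => i; rewrite !inE.
  by case: (eqVneq i x) => //= _ /andP[-> ->].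
by rewrite cardsU1; case: (x \in _).
Qed.

Lemma count_eq (A : {set 'I_n}) x (P : pred 'I_n) : ~~ P x ->
  #|[set i in A :\ x | P i]| = #|[set i in A | P i]|.
Proof.
move=> Px; apply: eq_card => i; rewrite !inE.
by case: (eqVneq i x) => [->|]; rewrite ?(negbTE Px) ?andbF.
Qed.

Lemma combine {P Q1 Q2 G1 G2 G : R} : P * (1 - Q1) <= P * G1 ->
  (1 - P) * (1 - Q2) <= (1 - P) * G2 -> P * G1 + (1 - P) * G2 <= G ->
  1 - ((1 - P) * Q2 + P * Q1) <= G.
Proof. move=> *; nra. Qed.

Definition Hyp (A X : {set 'I_n}) (m : nat) : Prop :=
  forall w : 'rV[C]_d, w != 0 -> w *m NN X = 0 ->
    (m <= #|[set i in A | lin i w != 0%R]|)%N.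

Lemma key k : forall (A X : {set 'I_n}) m, #|A| = k -> Hyp A X m ->
  1 - g m (\rank (kermx (NN X))) <= Q A X.
Proof.
elim: k => [|k IH] A X m cA H.
  have A0 : A = set0 by apply/eqP; rewrite -cards_eq0 cA.
  rewrite A0 in H *.
  rewrite Q0; case: ifP => sp.
    by rewrite lerBlDr lerDl g_ge0.
  have K0 : kermx (NN X) != 0 by rewrite kermx_eq0 -spansE sp.
  have [i Ri] : exists i, row i (kermx (NN X)) != 0.
    apply/existsP; apply: contraR K0; rewrite negb_exists => /forallP Hr.
    by apply/eqP/row_matrixP => i; rewrite row0; apply/eqP; move: (Hr i); rewrite negbK.
  have := H _ Ri; rewrite -row_mul mulmx_ker row0 => /(_ erefl).
  move=> Hm; have -> : m = 0%N.
    apply/eqP; rewrite -leqn0; apply: leq_trans Hm _; rewrite leqn0 cards_eq0.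
    by apply/eqP/setP => j; rewrite !inE.
  have r0 : \rank (kermx (NN X)) != 0%N by rewrite mxrank_eq0.
  rewrite /g (negbTE r0) expr0 mulr1.
  by rewrite subr_le0; apply: exprn_ege1; rewrite ler1n.
have /card_gt0P [x xA] : (0 < #|A|)%N by rewrite cA.
have cA' : #|A :\ x| = k by move: cA; rewrite (cardsD1 x A) xA add1n => -[].
rewrite (Qsplit _ _ x xA).
have K10 := kermx_mono _ _ (subsetUr [set x] X).
case: (boolP (kermx (NN X) <= kermx (NN (x |: X)))%MS) => Hsub.
  have Hx : forall w : 'rV[C]_d, w *m NN X = 0 -> lin x w = 0.
    move=> w /sub_kermxP wK; have /sub_kermxP := submx_trans wK Hsub.
    by move/NNkillsP; apply; rewrite setU11.
  have EQ : Q (A :\ x) (x |: X) = Q (A :\ x) X.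
    apply: eq_bigr => S _.
    suff -> : spans u ((x |: X) :|: S) = spans u (X :|: S) by [].
    apply/idP/idP => /spans_linP Hs; apply/spans_linP => w Hw; apply: Hs.
      move=> i; rewrite !inE; case/orP => [/orP[/eqP ->|iX]|iS].
      - by apply: Hx; apply/NNkillsP => j jX; apply: Hw; rewrite inE jX.
      - by apply: Hw; rewrite inE iX.
      - by apply: Hw; rewrite inE iS orbT.
    by move=> i; rewrite !inE => /orP[iX|iS]; apply: Hw; rewrite !inE ?iX ?iS ?orbT.
  rewrite EQ -mulrDl subrK mul1r; apply: IH => // w w0 wX.
  rewrite count_eq; first exact: H.
  by rewrite negbK (Hx _ wX).
have lt : (\rank (kermx (NN (x |: X))) < \rank (kermx (NN X)))%N.
  by apply: rank_ltmx; rewrite ltmxE K10.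
have IH1 : 1 - g m (\rank (kermx (NN (x |: X)))) <= Q (A :\ x) (x |: X).
  apply: IH => // w w0 wX; rewrite count_eq.
    apply: H => //; apply/NNkillsP => j jX.
    by move/NNkillsP: wX; apply; rewrite inE jX orbT.
  by rewrite negbK; apply/eqP; move/NNkillsP: wX; apply; rewrite setU11.
have IH2 : 1 - g m.-1 (\rank (kermx (NN X))) <= Q (A :\ x) X.
  apply: IH => // w w0 wX; have := H _ w0 wX.
  move/leq_trans/(_ (count_D1 A x (fun i => lin i w != 0))).
  by move=> le; rewrite -subn1 leq_subLR add1n.
set r0 := \rank (kermx (NN X)) in lt IH2 *.
set r1 := \rank (kermx (NN (x |: X))) in lt IH1.
have Hrec := g_rec m r0 (leq_ltn_trans (leq0n _) lt).
have Hmon : g m r1 <= g m r0.-1 by apply: g_monor; rewrite -ltnS prednK // (leq_ltn_trans (leq0n _) lt).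
have E1 : p * (1 - Q (A :\ x) (x |: X)) <= p * g m r0.-1.
  by apply: ler_wpM2l => //; apply: le_trans _ Hmon; rewrite lerBlDr -lerBlDl.
have E2 : (1 - p) * (1 - Q (A :\ x) X) <= (1 - p) * g m.-1 r0.
  by apply: ler_wpM2l; [rewrite subr_ge0 | rewrite lerBlDr -lerBlDl].
by rewrite lerBlDr -lerBlDl; exact: (combine E1 E2 Hrec).
Qed.
End Comb.

Section Design.
Variable R : realType.
Local Notation C := R[i].

Lemma adjmxE m k (A : 'M[C]_(m, k)) i j : adjmx A i j = (A j i)^*.
Proof. by rewrite /adjmx !mxE. Qed.

Lemma adjmx_mul m k l (A : 'M[C]_(m, k)) (B : 'M[C]_(k, l)) :
  adjmx (A *m B) = adjmx B *m adjmx A.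
Proof. by rewrite /adjmx map_mxM trmx_mul. Qed.

Lemma tr11 (A : 'M[C]_1) : \tr A = A 0 0.
Proof. by rewrite /mxtrace big_ord1. Qed.

Variable d : nat.

Lemma tr_rank1 (w : 'rV[C]_d) (v : 'cV[C]_d) :
  \tr ((adjmx w *m w) *m (v *m adjmx v)) = `|(w *m v) 0 0| ^+ 2.
Proof.
have -> : (adjmx w *m w) *m (v *m adjmx v) = (adjmx w *m (w *m v)) *m adjmx v.
  by rewrite !mulmxA.
rewrite mxtrace_mulC (mulmxA (adjmx v)) -adjmx_mul tr11.
by rewrite mxE big_ord1 adjmxE normCKC.
Qed.

Lemma tr_id (v : 'cV[C]_d) : \tr (1%:M *m (v *m adjmx v)) = sqnorm v.
Proof. by rewrite mul1mx mxtrace_mulC tr11. Qed.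

Lemma Mw_entry (w : 'rV[C]_d) j k : (adjmx w *m w) j k = (w 0 j)^* * w 0 k.
Proof. by rewrite mxE big_ord1 adjmxE. Qed.

Definition Nw (w : 'rV[C]_d) : C := \sum_j `|w 0 j| ^+ 2.

Lemma frob_Mw (w : 'rV[C]_d) :
  \sum_(j < d) \sum_(k < d) `|(adjmx w *m w) j k| ^+ 2 = Nw w ^+ 2.
Proof.
rewrite expr2 /Nw mulr_suml; apply: eq_bigr => j _; rewrite mulr_sumr.
by apply: eq_bigr => k _; rewrite Mw_entry normrM norm_conjC exprMn.
Qed.

Lemma tr_Mw (w : 'rV[C]_d) : \tr (adjmx w *m w) = Nw w.
Proof. by apply: eq_bigr => j _; rewrite Mw_entry normCKC. Qed.

Lemma selfadj_Mw (w : 'rV[C]_d) : selfadj (adjmx w *m w).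
Proof.
by apply/matrixP => j k; rewrite adjmxE !Mw_entry rmorphM /= conjCK mulrC.
Qed.

Lemma selfadj1 : selfadj (1%:M : 'M[C]_d).
Proof.
apply/matrixP => j k; rewrite adjmxE !mxE eq_sym.
exact: conjC_nat.
Qed.

Lemma selfaddD (A B : 'M[C]_d) : selfadj A -> selfadj B -> selfadj (A + B).
Proof.
move=> HA HB; apply/matrixP => j k; rewrite adjmxE !mxE rmorphD /=.
by rewrite -[(A k j)^*](adjmxE _ _ A) -[(B k j)^*](adjmxE _ _ B) HA HB.
Qed.


Lemma Mw1_entry (w : 'rV[C]_d) j k :
  (adjmx w *m w + 1%:M) j k = (adjmx w *m w) j k + (j == k)%:R.
Proof. by rewrite [LHS]mxE [1%:M j k]mxE. Qed.

Lemma Mjj (w : 'rV[C]_d) j : (adjmx w *m w) j j = `|w 0 j| ^+ 2.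
Proof. by rewrite Mw_entry normCKC. Qed.

Lemma frob_Mw1 (w : 'rV[C]_d) :
  \sum_(j < d) \sum_(k < d) `|(adjmx w *m w + 1%:M) j k| ^+ 2
  = Nw w ^+ 2 + 2 * Nw w + d%:R.
Proof.
have hrow j : \sum_(k < d) `|(adjmx w *m w + 1%:M) j k| ^+ 2 =
    \sum_(k < d) `|(adjmx w *m w) j k| ^+ 2 + (2 * `|w 0 j| ^+ 2 + 1).
  rewrite (bigD1 j) // [X in _ = X + _](bigD1 j) //=.
  rewrite Mw1_entry eqxx Mjj.
  have -> : \sum_(i < d | i != j) `|(adjmx w *m w + 1%:M) j i| ^+ 2 =
            \sum_(i < d | i != j) `|(adjmx w *m w) j i| ^+ 2.
    apply: eq_bigr => k kj; rewrite Mw1_entry eq_sym (negbTE kj) addr0 //.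
  set a := `|w 0 j| ^+ 2.
  have h0 : 0 <= a by apply: exprn_ge0.
  rewrite (@ger0_norm _ (a + true%:R)); last by rewrite addr_ge0.
  rewrite (@ger0_norm _ a) // mulr1n; ring.
rewrite (eq_bigr _ (fun j _ => hrow j)) big_split /= -frob_Mw.
rewrite big_split /= sumr_const card_ord -mulr_sumr.
by rewrite addrA.
Qed.

Lemma tr_Mw1 (w : 'rV[C]_d) : \tr (adjmx w *m w + 1%:M) = Nw w + d%:R.
Proof. by rewrite mxtraceD tr_Mw mxtrace_scalar. Qed.

Lemma tr_rank1' (w : 'rV[C]_d) (v : 'cV[C]_d) :
  \tr ((adjmx w *m w + 1%:M) *m (v *m adjmx v)) = `|(w *m v) 0 0| ^+ 2 + sqnorm v.
Proof. by rewrite mulmxDl mxtraceD tr_rank1 tr_id. Qed.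
End Design.

Section Real.
Variable R : realType.

Lemma cs_set (n : nat) (y : 'I_n -> R) :
  (\sum_i y i) ^+ 2 <= #|[set i | y i != 0]|%:R * \sum_i y i ^+ 2.
Proof.
set T := [set i | y i != 0].
have E1 : \sum_i y i = \sum_(i in T) y i.
  rewrite (bigID (mem T)) /= [X in _ + X]big1 ?addr0 // => i.
  by rewrite inE negbK => /eqP.
have E2 : \sum_i y i ^+ 2 = \sum_(i in T) y i ^+ 2.
  rewrite (bigID (mem T)) /= [X in _ + X]big1 ?addr0 // => i.
  by rewrite inE negbK => /eqP ->; rewrite expr0n.
rewrite E1 E2; set S1 := \sum_(i in T) y i; set S2 := \sum_(i in T) y i ^+ 2.
case: (posnP #|T|) => [T0|Tpos].
  have -> : S1 = 0 by rewrite /S1 big1 // => i iT; move: (card0_eq T0 i); rewrite iT.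
  by rewrite expr0n /= T0 mul0r.
set t : R := #|T|%:R.
have tpos : 0 < t by rewrite ltr0n.
set m := S1 / t.
have H : 0 <= \sum_(i in T) (y i - m) ^+ 2 by apply: sumr_ge0 => i _; apply: sqr_ge0.
have E3 : \sum_(i in T) (y i - m) ^+ 2 = S2 - 2 * m * S1 + t * m ^+ 2.
  rewrite (eq_bigr (fun i => y i ^+ 2 - 2 * m * y i + m ^+ 2)); last by move=> i _; ring.
  rewrite big_split sumrB /= -mulr_sumr sumr_const -/S1 -/S2 -mulr_natl -/t; ring.
rewrite E3 in H.
have : 0 <= t * (S2 - 2 * m * S1 + t * m ^+ 2) by apply: mulr_ge0 => //; apply: ltW.
have -> : t * (S2 - 2 * m * S1 + t * m ^+ 2) = t * S2 - S1 ^+ 2.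
  rewrite /m; field; by rewrite gt_eqF.
by rewrite subr_ge0.
Qed.

Lemma count_real (n d K S1 S2 Nr : R) : 0 < n -> 0 < d -> 0 < Nr -> 0 <= K ->
  n^-1 * S2 = (d * (d + 1))^-1 * (Nr ^+ 2 + Nr ^+ 2) ->
  n^-1 * (S2 + 2 * S1 + n) = (d * (d + 1))^-1 * ((Nr ^+ 2 + 2 * Nr + d) + (Nr + d) ^+ 2) ->
  S1 ^+ 2 <= K * S2 -> n <= 2 * K.
Proof.
move=> n0 d0 N0 K0 E1 E2 CS.
have D0 : 0 < d * (d + 1) by apply: mulr_gt0 => //; apply: addr_gt0.
have d10 : d + 1 != 0 by rewrite gt_eqF // addr_gt0.
have dn0 : d != 0 by rewrite gt_eqF.
have e1 : S2 * (d * (d + 1)) = n * (Nr ^+ 2 + Nr ^+ 2).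
  have -> : S2 = n * ((d * (d + 1))^-1 * (Nr ^+ 2 + Nr ^+ 2)).
    by rewrite -E1 mulrA mulfV ?mul1r // gt_eqF.
  by field; rewrite d10 dn0.
have e2 : (S2 + 2 * S1 + n) * (d * (d + 1)) = n * ((Nr ^+ 2 + 2 * Nr + d) + (Nr + d) ^+ 2).
  have -> : S2 + 2 * S1 + n = n * ((d * (d + 1))^-1 * ((Nr ^+ 2 + 2 * Nr + d) + (Nr + d) ^+ 2)).
    by rewrite -E2 mulrA mulfV ?mul1r // gt_eqF.
  by field; rewrite d10 dn0.
have e3 : (S1 * d - n * Nr) * (2 * (d + 1)) = 0.
  have -> : (S1 * d - n * Nr) * (2 * (d + 1)) =
    (S2 + 2 * S1 + n) * (d * (d + 1)) - S2 * (d * (d + 1))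
    - (n * ((Nr ^+ 2 + 2 * Nr + d) + (Nr + d) ^+ 2) - n * (Nr ^+ 2 + Nr ^+ 2)) by ring.
  by rewrite e1 e2 !subrr.
have e4 : S1 * d = n * Nr.
  move/eqP: e3; rewrite mulf_eq0 subr_eq0 => /orP[/eqP //|].
  by rewrite gt_eqF // mulr_gt0 // addr_gt0.
have h5 : (S1 * d) ^+ 2 * (d * (d + 1)) <= K * (S2 * (d * (d + 1))) * d ^+ 2.
  have -> : (S1 * d) ^+ 2 * (d * (d + 1)) = S1 ^+ 2 * (d ^+ 2 * (d * (d + 1))) by ring.
  have -> : K * (S2 * (d * (d + 1))) * d ^+ 2 = (K * S2) * (d ^+ 2 * (d * (d + 1))) by ring.
  by apply: ler_wpM2r => //; apply: mulr_ge0; [apply: sqr_ge0 | apply: ltW].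
rewrite e4 e1 in h5.
have h6 : (n * Nr ^+ 2 * d) * (n * (d + 1)) <= (n * Nr ^+ 2 * d) * (2 * K * d).
  by move: h5; congr (_ <= _); ring.
have P : 0 < n * Nr ^+ 2 * d by rewrite !mulr_gt0 // exprn_gt0.
rewrite ler_pM2l // in h6.
have : n * d <= 2 * K * d by apply: le_trans h6; rewrite ler_pM2l // lerDl.
by rewrite ler_pM2r.
Qed.
End Real.


Arguments Nw {R d}. Arguments selfadj_Mw {R d}. Arguments selfaddD {R d A B}. Arguments selfadj1 {R d}.
Section Count.
Variable R : realType.
Local Notation C := R[i].
Definition nr (z : C) : R := complex.Re `|z|.
Lemma nrE (z : C) : real_complex R (nr z) = `|z|.
Proof. exact: RRe_real (normr_real z). Qed.

Variables (d n : nat) (u : 'I_n -> 'cV[C]_d).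
Hypothesis Hd : proj_2design u.
Hypothesis n0 : (0 < n)%N.
Hypothesis d0 : (0 < d)%N.

Lemma design_count (w : 'rV[C]_d) : w != 0 ->
  (n <= (#|[set i | lin R d n u i w != 0%R]|).*2)%N.
Proof.
move=> w0; case: Hd => Hunit Hdes.
pose c i := (w *m u i) 0 0.
have E1 : n%:R^-1 * \sum_i (`|c i| ^+ 2) ^+ 2
    = (d%:R * (d%:R + 1))^-1 * (Nw w ^+ 2 + Nw w ^+ 2).
  have := Hdes _ (selfadj_Mw w); rewrite frob_Mw tr_Mw => <-.
  by congr (_ * _); apply: eq_bigr => i _; rewrite tr_rank1 normrX normr_id.
have E2 : n%:R^-1 * \sum_i (`|c i| ^+ 2 + 1) ^+ 2
    = (d%:R * (d%:R + 1))^-1 * ((Nw w ^+ 2 + 2 * Nw w + d%:R) + (Nw w + d%:R) ^+ 2).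
  have := Hdes _ (selfaddD (selfadj_Mw w) selfadj1).
  rewrite frob_Mw1 tr_Mw1 => <-.
  congr (_ * _); apply: eq_bigr => i _; rewrite tr_rank1' Hunit.
  by rewrite (@ger0_norm _ (`|(w *m u i) 0 0| ^+ 2 + 1)) // addr_ge0 // exprn_ge0.
pose y i := nr (c i) ^+ 2.
have [Nr [NC Npos]] : exists Nr, real_complex R Nr = Nw w /\ 0 < Nr.
  exists (\sum_j nr (w 0 j) ^+ 2); split.
    by rewrite rmorph_sum; apply: eq_bigr => j _; rewrite rmorphXn /= nrE.
  rewrite lt_def sumr_ge0 ?andbT; last by move=> j _; apply: sqr_ge0.
  apply: contra w0 => /eqP /psumr_eq0P H; apply/eqP/rowP => j; rewrite mxE.
  have := H (fun i _ => sqr_ge0 _) j isT; move/eqP; rewrite sqrf_eq0 => /eqP nr0.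
  by apply/eqP; rewrite -normr_eq0 -nrE nr0 rmorph0.
have yC i : real_complex R (y i) = `|c i| ^+ 2 by rewrite rmorphXn /= nrE.
have R1 : n%:R^-1 * \sum_i y i ^+ 2 = (d%:R * (d%:R + 1))^-1 * (Nr ^+ 2 + Nr ^+ 2).
  apply: complexI.
  rewrite !(rmorphM, fmorphV, rmorphD, rmorph_nat, rmorph1, rmorphXn, rmorph_sum) /= NC.
  by rewrite -E1; congr (_ * _); apply: eq_bigr => i _; rewrite rmorphXn /= yC.
have R2 : n%:R^-1 * \sum_i (y i + 1) ^+ 2 = (d%:R * (d%:R + 1))^-1 * ((Nr ^+ 2 + 2 * Nr + d%:R) + (Nr + d%:R) ^+ 2).
  apply: complexI.
  rewrite !(rmorphM, fmorphV, rmorphD, rmorph_nat, rmorph1, rmorphXn, rmorph_sum) /= NC.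
  by rewrite -E2; congr (_ * _); apply: eq_bigr => i _; rewrite rmorphXn /= rmorphD rmorph1 /= yC.
have cnt : #|[set i | lin R d n u i w != 0]| = #|[set i | y i != 0]|.
  apply: eq_card => i; rewrite !inE.
  by rewrite -(fmorph_eq0 (real_complex R)) /= yC sqrf_eq0 normr_eq0.
have S2E : \sum_i (y i + 1) ^+ 2 = \sum_i y i ^+ 2 + 2 * \sum_i y i + n%:R.
  rewrite (eq_bigr (fun i => y i ^+ 2 + 2 * y i + 1)); last by move=> i _; ring.
  by rewrite !big_split /= -mulr_sumr sumr_const card_ord.
rewrite S2E in R2.
have hn : 0 < n%:R :> R by rewrite ltr0n.
have hd : 0 < d%:R :> R by rewrite ltr0n.
have := count_real _ _ _ _ _ _ _ hn hd Npos (ler0n _ _) R1 R2 (cs_set _ _ y).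
by rewrite cnt -natrM ler_nat mul2n.
Qed.
End Count.

Local Notation expR := sequences.expR.
Lemma gbound (R : realType) (d n s : nat) (delta : R) :
  (1 <= s)%N -> (s <= n)%N -> 0 < delta -> delta < 1 ->
  4 * (Num.sqrt (d%:R : R) + Num.sqrt (ln (d%:R / delta))) ^+ 2 <= s%:R ->
  g R (s%:R / n%:R) (uphalf n) d <= delta.
Proof.
move=> s1 sn dpos dl1 Hs.
case: (posnP d) => [->|d0]; first by rewrite /g eqxx ltW.
have n0 : (0 < n)%N by apply: leq_trans s1 sn.
have nR : 0 < n%:R :> R by rewrite ltr0n.
have sR : 0 < s%:R :> R by rewrite ltr0n.
have dR : 1 <= d%:R :> R by rewrite ler1n.
set p := s%:R / n%:R.
have p0 : 0 <= p by rewrite /p divr_ge0 // ltW.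
set m := uphalf n.
have hm : n%:R <= 2 * m%:R :> R.
  by rewrite -natrM ler_nat mul2n /m uphalfK leq_addl.
set L := ln (d%:R / delta).
have L0 : 0 <= L by apply: ln_ge0; rewrite ler_pdivlMr // mul1r; apply: le_trans dR; apply: ltW.
have sL : d%:R + L <= s%:R / 4.
  have sd := sqr_sqrtr (ler0n R d); have sl := sqr_sqrtr L0.
  have := mulr_ge0 (sqrtr_ge0 (d%:R : R)) (sqrtr_ge0 L).
  move: Hs sd sl; rewrite -/L; set a := Num.sqrt _; set b := Num.sqrt _.
  move=> Hs sd sl ab; rewrite ler_pdivlMr //; nra.
rewrite /g; case: eqP => [d00|_]; first by move: d0; rewrite d00.
have p1 : p <= 1 by rewrite /p ler_pdivrMr // mul1r ler_nat.
have q0 : 0 <= q R p by rewrite /q; move: p1 => p1'; lra.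
have hq : q R p <= expR (- (p / 2)) by exact: expR_ge1Dx.
have hqm : q R p ^+ m <= expR (- (p / 2)) ^+ m.
  by apply: lerXn2r => //; rewrite nnegrE // expR_ge0.
rewrite -expRM_natr in hqm.
have ps : p * n%:R = s%:R by rewrite /p divfK // gt_eqF.
have hpm : s%:R / 4 <= p / 2 * m%:R.
  have hm' : 0 <= 2 * m%:R - n%:R :> R by rewrite subr_ge0.
  have := mulr_ge0 p0 hm'; move: ps; set N := n%:R; set M := m%:R; set S := s%:R.
  move=> ps H; nra.
have he : expR (- (p / 2) * m%:R) <= expR (- (s%:R / 4)).
  by rewrite ler_expR mulNr lerN2.
have h2 : 2 ^+ d <= expR (d%:R : R).
  rewrite -[d%:R]mulr1 expRM_natl; apply: lerXn2r; rewrite ?nnegrE ?expR_ge0 //.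
  by have := expR_ge1Dx (1 : R); rewrite (_ : 1 + 1 = 2 :> R).
have hprod : 2 ^+ d * q R p ^+ m <= expR (d%:R : R) * expR (- (s%:R / 4)).
  apply: ler_pM; [exact: exprn_ge0 | exact: exprn_ge0 q0 | exact: h2 | ].
  exact: le_trans hqm he.
rewrite -expRD in hprod.
have hL : expR (d%:R - s%:R / 4) <= expR (- L) by rewrite ler_expR; lra.
have eL : expR (- L) = delta / d%:R.
  rewrite expRN /L lnK ?invf_div //.
  by rewrite posrE divr_gt0 // (lt_le_trans ltr01 dR).
have hd : delta / d%:R <= delta.
  by rewrite ler_pdivrMr ?(lt_le_trans ltr01 dR) // ler_peMr // ltW.
by apply: le_trans hprod _; apply: le_trans hL _; rewrite eL.
Qed.

Lemma QT (R : realType) (d n : nat) (u : 'I_n -> 'cV[R[i]]_d) (p : R) :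
  Q R d n u p setT set0 = prob_spans u p.
Proof.
rewrite /Q /prob_spans [RHS]big_mkcond /=; apply: eq_big => S.
  by rewrite subsetT.
move=> _; rewrite set0U.
have -> : wt R n p setT S = bern_prob p S.
  rewrite /wt /bern_prob (bigID (mem S)) /=.
  rewrite (eq_bigr (fun _ => p)); last by move=> i /andP[_ ->].
  rewrite [X in _ * X](eq_bigr (fun _ => 1 - p)); last by move=> i /andP[_ /negbTE ->].
  rewrite !prodr_const; congr (_ ^+ _ * _ ^+ _).
    by apply: eq_card => i; rewrite unfold_in /= in_setT.
  rewrite -[n in (n - _)%N](card_ord n) -(cardsC S) addKn.
  by apply: eq_card => i; rewrite unfold_in /= in_setT inE.
by case: ifP; rewrite ?mulr1 ?mulr0.
Qed.

Lemma NN0 (R : realType) (d n : nat) (u : 'I_n -> 'cV[R[i]]_d) :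
  \rank (kermx (NN R d n u set0)) = d.
Proof.
have -> : NN R d n u set0 = 0 by apply/matrixP => j i; rewrite !mxE inE.
by rewrite mxrank_ker mxrank0 subn0.
Qed.

Theorem theorem4p2 (R : realType) (d n s : nat) (u : 'I_n -> 'cV[R[i]]_d)
    (delta : R) :
  proj_2design u ->
  (1 <= s)%N -> (s <= n)%N ->
  0 < delta -> delta < 1 ->
  4 * (Num.sqrt (d%:R : R) + Num.sqrt (ln (d%:R / delta))) ^+ 2 <= s%:R ->
  1 - delta <= prob_spans u (s%:R / n%:R).
Proof.
move=> Hd s1 sn dpos dl1 Hs.
have n0 : (0 < n)%N by apply: leq_trans s1 sn.
have nR : 0 < n%:R :> R by rewrite ltr0n.
set p := s%:R / n%:R.
have p0 : 0 <= p by rewrite /p divr_ge0 // ler0n.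
have p1 : p <= 1 by rewrite /p ler_pdivrMr // mul1r ler_nat.
have Hy : Hyp R d n u setT set0 (uphalf n).
  move=> w w0 _.
  case: (posnP d) => [d0|dpos'].
    have : w = 0 by apply/rowP => -[j hj]; exfalso; move: hj; rewrite d0.
    by move/eqP; rewrite (negbTE w0).
  rewrite leq_uphalf_double.
  have := design_count _ _ _ _ Hd n0 dpos' _ w0; move/leq_trans; apply.
  rewrite leq_double; apply: subset_leq_card; apply/subsetP => i.
  by rewrite !inE.
have K := key _ _ _ u _ p0 p1 _ _ _ _ (erefl #|[set: 'I_n]|) Hy.
rewrite NN0 QT in K.
apply: le_trans K; rewrite lerD2l lerN2.
exact: gbound.
Qed.
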